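(* Let $N\ge 1$ be an integer, $\mu=e^{2\pi i/N}$, and let $(s_1,i_1),\dots,(s_n,i_n)$ be pairs with $s_j$ positive integers and $i_j\in\mathbb{Z}$ ($n\ge 1$). For a positive integer $M$ put, with $i_0:=0$, $$H_M=\sum_{M\ge m_1>m_2>\cdots>m_n\ge 1}\ \prod_{j=1}^n \frac{\mu^{(i_j-i_{j-1})m_j}}{m_j^{s_j}}.$$ Then there exist finitely many positive integers $t_1,\dots,t_r$, complex numbers $a_1,\dots,a_r$, and a number $c\in\mathsf{CMZV}^N_{s_1+\cdots+s_n}$ such that $$H_M=\sum_{j=1}^r a_j(\log M+\gamma)^{t_j}+c+o(1)\qquad (M\to\infty),$$ where $\gamma$ is the Euler–Mascheroni constant.
   Context: For positive integers $s_1,\dots,s_k$ and complex $a_1,\dots,a_k$ define $L_{s_1,\dots,s_k}(a_1,\dots,a_k)=\sum_{n_1>\cdots>n_k\ge1}\frac{a_1^{n_1}\cdots a_k^{n_k}}{n_1^{s_1}\cdots n_k^{s_k}}$. For integers $N\ge1$ and $w\ge1$, $\mathsf{CMZV}^N_w$ denotes the $\mathbb{Q}$-linear span of all values $L_{s_1,\dots,s_k}(a_1,\dots,a_k)$ with $k\ge1$, $s_j$ positive integers with $s_1+\cdots+s_k=w$, each $a_j$ an $N$-th root of unity, and $(s_1,a_1)\neq(1,1)$ (so that the series converges). These are the colored multiple zeta values of weight $w$ and level $N$. *)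

(* Defs.v *)
From Stdlib Require Import Reals List ZArith QArith.
From Coquelicot Require Import Coquelicot.
Open Scope R_scope.

(* mu_pow N k = mu^k with mu = e^{2 pi i / N}, i.e. cos(2 pi k/N) + i sin(2 pi k/N). *)
Definition mu_pow (N : nat) (k : Z) : C :=
  (cos (2 * PI * IZR k / INR N), sin (2 * PI * IZR k / INR N)).

Fixpoint csum (f : nat -> C) (M : nat) : C :=
  match M with
  | O => RtoC 0
  | S M' => Cplus (csum f M') (f (S M'))
  end.

(* Truncated nested sum:
   nsum [(s1,a1);...;(sk,ak)] M =
     sum_{M >= m1 > m2 > ... > mk >= 1} prod_j a_j^{m_j} / m_j^{s_j}. *)
Fixpoint nsum (l : list (nat * C)) (M : nat) : C :=
  match l with
  | nil => RtoC 1
  | (s, a) :: r =>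
      csum (fun m => Cmult (Cdiv (Cpow a m) (Cpow (RtoC (INR m)) s)) (nsum r (m - 1))) M
  end.

Definition cmzv_data (N w : nat) (d : list (nat * C)) : Prop :=
  List.Forall (fun p => (1 <= fst p)%nat /\ Cpow (snd p) N = RtoC 1) d /\
  fold_right (fun p acc => (fst p + acc)%nat) O d = w /\
  match d with
  | nil => False
  | (s, a) :: _ => ~ (s = 1%nat /\ a = RtoC 1)
  end.

Definition mzv_value (d : list (nat * C)) (v : C) : Prop :=
  is_lim_seq (fun M => Cmod (Cminus (nsum d M) v)) 0.

Definition in_CMZV (N w : nat) (c : C) : Prop :=
  exists l : list (Q * list (nat * C) * C),
    List.Forall (fun e => cmzv_data N w (snd (fst e)) /\ mzv_value (snd (fst e)) (snd e)) l /\
    c = fold_right (fun e acc => Cplus (Cmult (RtoC (Q2R (fst (fst e)))) (snd e)) acc)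
                   (RtoC 0) l.

Fixpoint colors (N : nat) (prev : Z) (l : list (nat * Z)) : list (nat * C) :=
  match l with
  | nil => nil
  | (s, i) :: r => (s, mu_pow N (i - prev)) :: colors N i r
  end.

Definition H (N : nat) (l : list (nat * Z)) (M : nat) : C := nsum (colors N 0 l) M.

Definition weight (l : list (nat * Z)) : nat :=
  fold_right (fun p acc => (fst p + acc)%nat) O l.

Fixpoint harm (n : nat) : R :=
  match n with O => 0 | S n' => harm n' + / INR (S n') end.

Definition EulerGamma : R := real (Lim_seq (fun n => harm n - ln (INR n))).

(* Main.v *)
Require Import Defs.
From Stdlib Require Import Reals List ZArith QArith.
From Coquelicot Require Import Coquelicot.
From Stdlib Require Import Qreals Lra Lia Classical.
Open Scope R_scope.

Lemma ln_le_minus1 x : 0 < x -> ln x <= x - 1.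
Proof. intros Hx. pose proof (exp_ineq1_le (ln x)) as E. rewrite exp_ln in E by exact Hx. lra. Qed.

Lemma INR_S_pos n : 0 < INR (S n).
Proof. apply lt_0_INR; lia. Qed.

Lemma harm_S n : harm (S n) = harm n + / INR (S n).
Proof. reflexivity. Qed.

Lemma harm_ge0 n : 0 <= harm n.
Proof. induction n. simpl; lra. rewrite harm_S. pose proof (Rinv_0_lt_compat _ (INR_S_pos n)). lra. Qed.

Lemma harm_mono n m : (n <= m)%nat -> harm n <= harm m.
Proof. induction 1. lra. rewrite harm_S. pose proof (Rinv_0_lt_compat _ (INR_S_pos m)). lra. Qed.

Lemma harm_ge1 n : (1 <= n)%nat -> 1 <= harm n.
Proof. intros H. pose proof (harm_mono 1 n H) as E. simpl in E. lra. Qed.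

Lemma INRpos n : (1 <= n)%nat -> 0 < INR n.
Proof. intros; apply lt_0_INR; lia. Qed.

Lemma INR_ge1 n : (1 <= n)%nat -> 1 <= INR n.
Proof. intros; apply (le_INR 1 n) in H; simpl in H; lra. Qed.

Lemma ln_step n : (1 <= n)%nat ->
  / INR (S n) <= ln (INR (S n)) - ln (INR n) <= / INR n.
Proof.
  intros Hn. pose proof (INRpos n Hn) as P. pose proof (INR_S_pos n) as P1.
  rewrite S_INR in *. split.
  - assert (Hq : 0 < INR n / (INR n + 1)) by (apply Rdiv_lt_0_compat; lra).
    pose proof (ln_le_minus1 _ Hq) as E. rewrite ln_div in E by lra.
    assert (INR n / (INR n + 1) - 1 = - / (INR n + 1)) by (field; lra). lra.
  - assert (Hq : 0 < (INR n + 1) / INR n) by (apply Rdiv_lt_0_compat; lra).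
    pose proof (ln_le_minus1 _ Hq) as E. rewrite ln_div in E by lra.
    assert ((INR n + 1) / INR n - 1 = / INR n) by (field; lra). lra.
Qed.

Definition dseq n := harm n - ln (INR n).

Lemma dseq_step n : (1 <= n)%nat -> 0 <= dseq n - dseq (S n) <= / INR n - / INR (S n).
Proof.
  intros Hn. pose proof (ln_step n Hn). unfold dseq. rewrite harm_S. lra.
Qed.

Lemma dseq_diff n m : (1 <= n)%nat -> (n <= m)%nat -> 0 <= dseq n - dseq m <= / INR n - / INR m.
Proof.
  intros Hn. induction 1. lra.
  pose proof (dseq_step m ltac:(lia)). lra.
Qed.

Lemma inv_INRpos n : (1 <= n)%nat -> 0 < / INR n.
Proof. intros; apply Rinv_0_lt_compat, INRpos; auto. Qed.

Lemma inv_INR_le n m : (1 <= n)%nat -> (n <= m)%nat -> / INR m <= / INR n.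
Proof. intros; apply Rinv_le_contravar. apply INRpos; auto. apply le_INR; auto. Qed.

Lemma lim_inv_n : is_lim_seq (fun n => / INR n) 0.
Proof.
  replace (Finite 0) with (Rbar_inv p_infty) by reflexivity.
  apply is_lim_seq_inv. apply is_lim_seq_INR. discriminate.
Qed.

Definition q4 (n : nat) := sqrt (sqrt (INR n)).

Lemma q4_ge1 n : (1 <= n)%nat -> 1 <= q4 n.
Proof.
  intros Hn. unfold q4. pose proof (INR_ge1 n Hn).
  rewrite <- sqrt_1. apply sqrt_le_1_alt. rewrite <- sqrt_1. apply sqrt_le_1_alt. lra.
Qed.

Lemma q4_pow4 n : q4 n ^ 4 = INR n.
Proof.
  unfold q4. assert (0 <= INR n) by apply pos_INR.
  replace (sqrt (sqrt (INR n)) ^ 4) with ((sqrt (sqrt (INR n)) * sqrt (sqrt (INR n))) * (sqrt (sqrt (INR n)) * sqrt (sqrt (INR n)))) by ring.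
  rewrite sqrt_sqrt by (apply sqrt_pos). rewrite sqrt_sqrt; auto.
Qed.

Lemma lim_invq : is_lim_seq (fun n => / q4 n) 0.
Proof.
  apply is_lim_seq_spec. intros eps.
  pose proof (cond_pos eps) as Pe.
  set (K := (/ eps) ^ 4).
  destruct (archimed K) as [A _].
  exists (S (Z.to_nat (up K))). intros n Hn.
  assert (HK : 0 < K) by (apply pow_lt; apply Rinv_0_lt_compat; lra).
  assert (Hup : (0 <= up K)%Z) by (apply le_IZR; lra).
  assert (Hn' : K < INR n).
  { apply Rlt_le_trans with (IZR (up K)); auto.
    rewrite <- (Z2Nat.id (up K)) by lia. rewrite <- INR_IZR_INZ. apply le_INR. lia. }
  assert (Hq : 1 <= q4 n) by (apply q4_ge1; lia).
  rewrite Rminus_0_r, Rabs_right by (apply Rle_ge, Rlt_le, Rinv_0_lt_compat; lra).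
  destruct (Rlt_or_le (/ q4 n) eps) as [L|L]; auto.
  exfalso.
  assert (q4 n <= / eps).
  { replace (q4 n) with (/ / q4 n) by (field; lra).
    apply Rinv_le_contravar; [lra | exact L]. }
  assert (q4 n ^ 4 <= K).
  { unfold K. apply pow_incr. split; auto. lra. }
  rewrite q4_pow4 in H0. lra.
Qed.

Lemma lim_squeeze (u : nat -> R) (v : nat -> R) :
  is_lim_seq v 0 -> (forall n, (1 <= n)%nat -> Rabs (u n) <= v n) -> is_lim_seq u 0.
Proof.
  intros Hv Hb. apply is_lim_seq_spec. apply is_lim_seq_spec in Hv.
  intros eps. destruct (Hv eps) as [N HN]. exists (S N). intros n Hn.
  specialize (HN n ltac:(lia)). specialize (Hb n ltac:(lia)).
  rewrite Rminus_0_r in *. apply Rle_lt_trans with (v n); auto.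
  apply Rle_lt_trans with (Rabs (v n)); auto. apply Rle_abs.
Qed.

Lemma lim_scal (v : nat -> R) (K : R) : is_lim_seq v 0 -> is_lim_seq (fun n => K * v n) 0.
Proof.
  intros H. replace (Finite 0) with (Rbar_mult K 0). apply is_lim_seq_scal_l; auto.
  simpl. f_equal. ring.
Qed.

Lemma lim_plus0 (u v : nat -> R) : is_lim_seq u 0 -> is_lim_seq v 0 -> is_lim_seq (fun n => u n + v n) 0.
Proof.
  intros H1 H2. replace (Finite 0) with (Rbar_plus 0 0). apply is_lim_seq_plus'; auto.
  simpl. f_equal. ring.
Qed.

Lemma dseq_cauchy : ex_lim_seq_cauchy dseq.
Proof.
  intros eps. pose proof lim_inv_n as L. apply is_lim_seq_spec in L.
  destruct (L eps) as [N HN]. exists (S N). intros n m Hn Hm.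
  assert (HNn := HN n ltac:(lia)). assert (HNm := HN m ltac:(lia)).
  rewrite Rminus_0_r in HNn, HNm.
  rewrite Rabs_right in HNn by (apply Rle_ge, Rlt_le, inv_INRpos; lia).
  rewrite Rabs_right in HNm by (apply Rle_ge, Rlt_le, inv_INRpos; lia).
  destruct (le_ge_dec n m).
  - pose proof (dseq_diff n m ltac:(lia) l). pose proof (inv_INRpos m ltac:(lia)).
    rewrite Rabs_right by lra. lra.
  - pose proof (dseq_diff m n ltac:(lia) g). pose proof (inv_INRpos n ltac:(lia)).
    rewrite Rabs_left1 by lra. lra.
Qed.

Lemma euler_bound : forall n, (1 <= n)%nat ->
  0 <= harm n - ln (INR n) - EulerGamma <= / INR n.
Proof.
  destruct (proj2 (ex_lim_seq_cauchy_corr dseq) dseq_cauchy) as [g Hg].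
  assert (EG : EulerGamma = g).
  { unfold EulerGamma. fold dseq. rewrite (is_lim_seq_unique _ _ Hg). reflexivity. }
  rewrite EG. intros n Hn.
  assert (Hl : is_lim_seq (fun m => dseq n - dseq m) (dseq n - g)).
  { apply is_lim_seq_minus'. apply is_lim_seq_const. auto. }
  split.
  - assert (Rbar_le 0 (dseq n - g)).
    { apply is_lim_seq_le_loc with (fun _ => 0) (fun m => dseq n - dseq m).
      exists n. intros m Hm. apply (dseq_diff n m Hn Hm). apply is_lim_seq_const. auto. }
    simpl in H. unfold dseq in H. lra.
  - assert (Rbar_le (dseq n - g) (/ INR n)).
    { apply is_lim_seq_le_loc with (fun m => dseq n - dseq m) (fun _ => / INR n).
      exists n. intros m Hm. pose proof (dseq_diff n m Hn Hm).
      pose proof (inv_INRpos m ltac:(lia)). lra. auto. apply is_lim_seq_const. }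
    simpl in H. unfold dseq in H. lra.
Qed.

Lemma harm_le_ln n : (1 <= n)%nat -> harm n <= 1 + ln (INR n).
Proof.
  intros Hn. pose proof (dseq_diff 1 n ltac:(lia) Hn) as D. unfold dseq in D.
  simpl in D. rewrite ln_1 in D. lra.
Qed.

Lemma q4_Rpower n : (1 <= n)%nat -> q4 n = Rpower (INR n) (/ 4).
Proof.
  intros Hn. pose proof (INRpos n Hn). unfold q4.
  assert (0 < sqrt (INR n)) by (apply sqrt_lt_R0; auto).
  rewrite <- (Rpower_sqrt (sqrt (INR n))) by auto. rewrite <- (Rpower_sqrt (INR n)) by auto.
  rewrite Rpower_mult. f_equal. field.
Qed.

Lemma harm_pow_bound d : exists C, 0 < C /\ forall n, (1 <= n)%nat -> harm n ^ d <= C * q4 n.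
Proof.
  destruct d as [|d].
  - exists 1. split. lra. intros n Hn. simpl. pose proof (q4_ge1 n Hn). lra.
  - set (D := INR (S d)). assert (HD : 0 < D) by apply INR_S_pos.
    exists ((1 + 4 * D) ^ (S d)). split. apply pow_lt; lra.
    intros n Hn. pose proof (INRpos n Hn) as Pn.
    set (R := Rpower (INR n) (/ (4 * D))).
    assert (HR1 : 1 <= R).
    { unfold R. rewrite <- (Rpower_O (INR n)) by auto. apply Rle_Rpower. apply INR_ge1; auto.
      left. apply Rinv_0_lt_compat. lra. }
    assert (Hln : ln (INR n) <= 4 * D * R).
    { assert (E : ln R = / (4 * D) * ln (INR n)) by (unfold R; apply ln_Rpower).
      pose proof (ln_le_minus1 R ltac:(lra)).
      replace (ln (INR n)) with (4 * D * ln R) by (rewrite E; field; lra).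
      assert (0 < 4 * D) by lra. nra. }
    pose proof (harm_le_ln n Hn).
    assert (Hh : harm n <= (1 + 4 * D) * R) by nra.
    apply Rle_trans with (((1 + 4 * D) * R) ^ S d).
    { apply pow_incr. split; auto. pose proof (harm_ge0 n); lra. }
    rewrite Rpow_mult_distr. apply Rmult_le_compat_l. apply pow_le; lra.
    right. unfold R. rewrite <- Rpower_pow by (unfold Rpower; apply exp_pos).
    rewrite Rpower_mult. rewrite q4_Rpower by auto. f_equal. fold D. field. lra.
Qed.

Lemma harm1_pow_bound d : exists C, 0 < C /\ forall n, (1 <= n)%nat -> (harm n + 1) ^ d <= C * q4 n.
Proof.
  destruct (harm_pow_bound d) as [C [HC B]]. exists (2 ^ d * C). split.
  apply Rmult_lt_0_compat; auto. apply pow_lt; lra.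
  intros n Hn. pose proof (harm_ge1 n Hn).
  apply Rle_trans with ((2 * harm n) ^ d). apply pow_incr; lra.
  rewrite Rpow_mult_distr. rewrite Rmult_assoc. apply Rmult_le_compat_l.
  apply pow_le; lra. auto.
Qed.


Definition tm (x : nat * C) (m : nat) : C := Cdiv (Cpow (snd x) m) (Cpow (RtoC (INR m)) (fst x)).

Lemma nsum_cons s a r M : nsum ((s,a)::r) M = csum (fun m => Cmult (tm (s,a) m) (nsum r (m-1))) M.
Proof. reflexivity. Qed.

Lemma csum_S f M : csum f (S M) = Cplus (csum f M) (f (S M)).
Proof. reflexivity. Qed.

Lemma nsum_cons_S x r M : nsum (x::r) (S M) = Cplus (nsum (x::r) M) (Cmult (tm x (S M)) (nsum r M)).
Proof. destruct x as [s a]. rewrite nsum_cons, csum_S. rewrite <- nsum_cons. do 3 f_equal. lia. Qed.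

Lemma nsum_cons_0 x r : nsum (x::r) 0 = RtoC 0.
Proof. destruct x; reflexivity. Qed.

Definition valid (N : nat) (x : nat * C) : Prop := (1 <= fst x)%nat /\ Cpow (snd x) N = RtoC 1.

Lemma RtoC_neq0 r : r <> 0 -> RtoC r <> RtoC 0.
Proof. intros H E. apply H. apply (f_equal fst) in E. exact E. Qed.

Lemma INRC_neq0 m : (1 <= m)%nat -> RtoC (INR m) <> RtoC 0.
Proof. intros; apply RtoC_neq0. pose proof (INRpos m H). lra. Qed.

Lemma cmod_root N a : (1 <= N)%nat -> Cpow a N = RtoC 1 -> Cmod a = 1.
Proof.
  intros HN E. apply (f_equal Cmod) in E. rewrite Cmod_pow, Cmod_1 in E.
  pose proof (Cmod_ge_0 a).
  destruct (Rtotal_order (Cmod a) 1) as [L|[L|L]]; auto.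
  - assert (Cmod a ^ N < 1) by (apply pow_lt_1_compat; [lra | lia]). lra.
  - assert (1 < Cmod a ^ N) by (apply Rlt_pow_R1; auto; lia). lra.
Qed.

Lemma tm_bound N x m : (1 <= N)%nat -> valid N x -> (1 <= m)%nat -> Cmod (tm x m) <= / INR m.
Proof.
  intros HN [Hs Ha] Hm. destruct x as [s a]; simpl in *. unfold tm; simpl.
  rewrite Cmod_div by (apply Cpow_nz, INRC_neq0; auto).
  rewrite !Cmod_pow, (cmod_root N a HN Ha), pow1, Cmod_R.
  pose proof (INRpos m Hm). rewrite Rabs_right by lra.
  unfold Rdiv. rewrite Rmult_1_l. apply Rinv_le_contravar. auto.
  destruct s. lia. simpl. pose proof (INR_ge1 m Hm).
  rewrite <- (Rmult_1_r (INR m)) at 1. apply Rmult_le_compat_l. lra.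
  apply pow_R1_Rle. lra.
Qed.

Lemma tm_merge s t a b m : (1 <= m)%nat -> tm (s + t, Cmult a b)%nat m = Cmult (tm (s,a) m) (tm (t,b) m).
Proof.
  intros Hm. unfold tm; simpl. rewrite Cpow_mult_l, Cpow_add_r.
  assert (Cpow (RtoC (INR m)) s <> RtoC 0) by (apply Cpow_nz, INRC_neq0; auto).
  assert (Cpow (RtoC (INR m)) t <> RtoC 0) by (apply Cpow_nz, INRC_neq0; auto).
  field. split; auto.
Qed.

Lemma nsum_bound N w M : (1 <= N)%nat -> List.Forall (valid N) w -> Cmod (nsum w M) <= harm M ^ length w.
Proof.
  intros HN. revert M. induction w as [|x r IH]; intros M Hw.
  - simpl. rewrite Cmod_1. lra.
  - inversion Hw as [|? ? Hx Hr]; subst. simpl length.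
    induction M as [|M IHM].
    + rewrite nsum_cons_0, Cmod_0. simpl. lra.
    + rewrite nsum_cons_S. eapply Rle_trans. apply Cmod_triangle.
      rewrite Cmod_mult. pose proof (tm_bound N x (S M) HN Hx ltac:(lia)) as T.
      pose proof (IH M Hr) as B. pose proof (Cmod_ge_0 (nsum r M)).
      pose proof (Cmod_ge_0 (tm x (S M))).
      rewrite harm_S. set (h := harm M) in *. set (e := / INR (S M)) in *.
      assert (0 <= h) by apply harm_ge0.
      assert (0 < e) by (apply Rinv_0_lt_compat, INR_S_pos).
      assert (h ^ length r <= (h + e) ^ length r) by (apply pow_incr; lra).
      assert (0 <= h ^ length r) by (apply pow_le; lra).
      simpl. apply Rle_trans with (h * h ^ length r + e * h ^ length r).
      apply Rplus_le_compat. exact IHM. apply Rmult_le_compat; auto.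
      nra.
Qed.

Lemma nsum_diff_bound N w m : (1 <= N)%nat -> List.Forall (valid N) w -> (1 <= m)%nat ->
  Cmod (Cminus (nsum w m) (nsum w (m - 1))) <= harm m ^ length w * / INR m.
Proof.
  intros HN Hw Hm. destruct w as [|x r].
  - simpl. replace (Cminus (RtoC 1) (RtoC 1)) with (RtoC 0) by ring. rewrite Cmod_0.
    rewrite Rmult_1_l. left; apply Rinv_0_lt_compat, INRpos; auto.
  - inversion Hw as [|? ? Hx Hr]; subst. destruct m as [|m]. lia.
    rewrite nsum_cons_S. replace (S m - 1)%nat with m by lia.
    replace (Cminus (Cplus (nsum (x :: r) m) (Cmult (tm x (S m)) (nsum r m))) (nsum (x :: r) m))
      with (Cmult (tm x (S m)) (nsum r m)) by ring.
    rewrite Cmod_mult. pose proof (tm_bound N x (S m) HN Hx Hm) as T.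
    pose proof (nsum_bound N r m HN Hr) as B.
    assert (harm m ^ length r <= harm (S m) ^ length (x :: r)).
    { replace (harm (S m) ^ length (x :: r)) with (harm (S m) * harm (S m) ^ length r) by reflexivity.
      pose proof (harm_ge1 (S m) ltac:(lia)). pose proof (harm_ge0 m).
      apply Rle_trans with (harm (S m) ^ length r). apply pow_incr. split; auto. apply harm_mono; lia.
      assert (0 <= harm (S m) ^ length r) by (apply pow_le; lra). nra. }
    pose proof (Cmod_ge_0 (nsum r m)). pose proof (Cmod_ge_0 (tm x (S m))).
    rewrite Rmult_comm. apply Rmult_le_compat; auto. lra.
Qed.


Definition merge (x y : nat * C) : nat * C := ((fst x + fst y)%nat, Cmult (snd x) (snd y)).

Fixpoint stuff1 (x : nat * C) (w : list (nat * C)) : list (list (nat * C)) :=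
  match w with
  | nil => (x :: nil) :: nil
  | y :: ys => (x :: y :: ys) :: (merge x y :: ys) :: map (cons y) (stuff1 x ys)
  end.

Definition sumS (L : list (list (nat * C))) (M : nat) : C :=
  fold_right (fun w acc => Cplus (nsum w M) acc) (RtoC 0) L.

Lemma sumS_nil M : sumS nil M = RtoC 0.
Proof. reflexivity. Qed.
Lemma sumS_cons w L M : sumS (w :: L) M = Cplus (nsum w M) (sumS L M).
Proof. reflexivity. Qed.
Lemma sumS_app L1 L2 M : sumS (L1 ++ L2) M = Cplus (sumS L1 M) (sumS L2 M).
Proof. induction L1 as [|w L1 IH]. rewrite app_nil_l, sumS_nil; ring. rewrite <- app_comm_cons, !sumS_cons, IH. ring. Qed.

Lemma csum_ext f g M : (forall m, (1 <= m)%nat -> f m = g m) -> csum f M = csum g M.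
Proof. intros H. induction M. reflexivity. rewrite !csum_S, IHM, H by lia. reflexivity. Qed.

Lemma sumS_map_cons_0 y L : sumS (map (cons y) L) 0 = RtoC 0.
Proof. induction L as [|w L IH]. reflexivity. simpl map. rewrite sumS_cons, IH, nsum_cons_0. ring. Qed.

Lemma sumS_map_cons_S y L M : sumS (map (cons y) L) (S M) =
  Cplus (sumS (map (cons y) L) M) (Cmult (tm y (S M)) (sumS L M)).
Proof.
  induction L as [|w L IH]. simpl map. rewrite !sumS_nil. ring.
  simpl map. rewrite !sumS_cons, IH, nsum_cons_S. ring.
Qed.

Lemma sumS_map_cons y L M : sumS (map (cons y) L) M = csum (fun m => Cmult (tm y m) (sumS L (m-1))) M.
Proof.
  induction M. apply sumS_map_cons_0.
  rewrite sumS_map_cons_S, csum_S, IHM. do 3 f_equal. lia.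
Qed.

Lemma nsum_single_S x M : nsum (x :: nil) (S M) = Cplus (nsum (x :: nil) M) (tm x (S M)).
Proof. rewrite nsum_cons_S. replace (nsum nil M) with (RtoC 1) by reflexivity. ring. Qed.

Lemma stuffle x w M : Cmult (nsum (x :: nil) M) (nsum w M) = sumS (stuff1 x w) M.
Proof.
  revert M. induction w as [|y ys IH]; intros M.
  - simpl. unfold sumS; simpl. ring.
  - assert (P : Cmult (nsum (x :: nil) M) (nsum (y :: ys) M) =
       Cplus (Cplus (nsum (x :: y :: ys) M) (nsum (merge x y :: ys) M))
             (csum (fun m => Cmult (tm y m) (Cmult (nsum (x :: nil) (m-1)) (nsum ys (m-1)))) M)).
    { induction M as [|M IHM].
      + rewrite !nsum_cons_0. simpl. ring.
      + rewrite nsum_single_S, !nsum_cons_S, csum_S.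
        replace (S M - 1)%nat with M by lia.
        assert (TM : tm (merge x y) (S M) = Cmult (tm x (S M)) (tm y (S M))).
        { destruct x as [s a], y as [t b]. unfold merge; simpl. apply tm_merge. lia. }
        rewrite TM.
        assert (E : nsum (x :: y :: ys) M = Cminus (Cminus (Cmult (nsum (x :: nil) M) (nsum (y :: ys) M)) (nsum (merge x y :: ys) M))
             (csum (fun m => Cmult (tm y m) (Cmult (nsum (x :: nil) (m-1)) (nsum ys (m-1)))) M)) by (rewrite IHM; ring).
        rewrite E. ring. }
    rewrite P. simpl stuff1. rewrite !sumS_cons, sumS_map_cons.
    rewrite (csum_ext _ (fun m => Cmult (tm y m) (sumS (stuff1 x ys) (m-1)))).
    ring. intros m _. rewrite IH. reflexivity.
Qed.


Definition x1 : nat * C := (1%nat, RtoC 1).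
Definition ones (k : nat) : list (nat * C) := repeat x1 k.
Definition good (N : nat) (u : list (nat * C)) : Prop :=
  List.Forall (valid N) u /\
  match u with nil => True | (s, a) :: _ => ~ (s = 1%nat /\ a = RtoC 1) end.
Definition wt (w : list (nat * C)) : nat := fold_right (fun p acc => (fst p + acc)%nat) O w.

Lemma wt_app w1 w2 : wt (w1 ++ w2) = (wt w1 + wt w2)%nat.
Proof. induction w1 as [|x w1 IH]; [reflexivity|]. change (wt ((x :: w1) ++ w2)) with (fst x + wt (w1 ++ w2))%nat. rewrite IH. change (wt (x :: w1)) with (fst x + wt w1)%nat. lia. Qed.
Lemma wt_ones k : wt (ones k) = k.
Proof. induction k as [|k IH]; [reflexivity|]. change (wt (ones (S k))) with (1 + wt (ones k))%nat. rewrite IH; reflexivity. Qed.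

Lemma valid_x1 N : valid N x1.
Proof. split; simpl. lia. apply Cpow_1_l. Qed.
Lemma valid_ones N k : List.Forall (valid N) (ones k).
Proof. induction k; simpl; constructor; auto. apply valid_x1. Qed.

Lemma valid_merge N x y : valid N x -> valid N y -> valid N (merge x y).
Proof.
  intros [Hx Ex] [Hy Ey]. split; unfold merge; simpl. lia.
  rewrite Cpow_mult_l, Ex, Ey. ring.
Qed.

Lemma stuff1_valid N x w : valid N x -> List.Forall (valid N) w ->
  List.Forall (List.Forall (valid N)) (stuff1 x w).
Proof.
  intros Hx Hw. induction Hw as [|y ys Hy Hys IH]; simpl.
  - constructor; [constructor; [exact Hx|constructor]|constructor].
  - constructor. constructor; [exact Hx| constructor; assumption]. constructor. constructor; auto. apply valid_merge; auto.
    apply Forall_map. eapply Forall_impl; [|exact IH]. intros v Hv. constructor; auto.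
Qed.

Lemma stuff1_wt x w : List.Forall (fun v => wt v = (fst x + wt w)%nat) (stuff1 x w).
Proof.
  induction w as [|y ys IH]; simpl stuff1.
  - constructor; [|constructor]. reflexivity.
  - constructor. reflexivity. constructor. unfold wt, merge; simpl. lia.
    apply Forall_map. eapply Forall_impl; [|exact IH]. intros v Hv.
    change (wt (y :: v)) with (fst y + wt v)%nat. rewrite Hv.
    change (wt (y :: ys)) with (fst y + wt ys)%nat. lia.
Qed.

Lemma csum_plus f g M : csum (fun m => Cplus (f m) (g m)) M = Cplus (csum f M) (csum g M).
Proof. induction M. simpl. ring. rewrite !csum_S, IHM. ring. Qed.
Lemma csum_scal c f M : csum (fun m => Cmult c (f m)) M = Cmult c (csum f M).
Proof. induction M. simpl. ring. rewrite !csum_S, IHM. ring. Qed.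

Lemma nsum_cons' x r M : nsum (x :: r) M = csum (fun m => Cmult (tm x m) (nsum r (m-1))) M.
Proof. destruct x; reflexivity. Qed.

Definition Rrest (N k : nat) (u : list (nat * C)) (w : list (nat * C)) : Prop :=
  exists j u', w = ones j ++ u' /\ (j <= k)%nat /\ good N u' /\ wt w = S (k + wt u).

Lemma stuff_ones N k u : good N u -> exists rest,
  (forall M, sumS (stuff1 x1 (ones k ++ u)) M =
     Cplus (Cmult (RtoC (INR (S k))) (nsum (ones (S k) ++ u) M)) (sumS rest M)) /\
  List.Forall (Rrest N k u) rest.
Proof.
  intros [Hu Hfirst]. induction k as [|k IH].
  - simpl ones. rewrite app_nil_l. destruct u as [|y ys].
    + exists nil. split. intros M. simpl stuff1. rewrite sumS_cons, !sumS_nil. change (ones 1 ++ nil) with (x1 :: nil). simpl (INR 1). ring. constructor.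
    + exists ((merge x1 y :: ys) :: map (cons y) (stuff1 x1 ys)). split.
      * intros M. simpl stuff1. rewrite !sumS_cons. simpl (INR 1). change (ones 1 ++ y :: ys) with (x1 :: y :: ys). ring.
      * inversion Hu as [|? ? Hy Hys]; subst.
        constructor.
        -- exists 0%nat, (merge x1 y :: ys). split. reflexivity. split. lia. split.
           split. constructor; auto. apply valid_merge; auto. apply valid_x1.
           destruct y as [t b]; unfold merge; simpl. intros [E _]. assert (1 <= t)%nat by (inversion Hy; simpl in *; lia). lia.
           unfold wt, merge; simpl. lia.
        -- apply Forall_map. pose proof (stuff1_valid N x1 ys (valid_x1 N) Hys) as V.
           pose proof (stuff1_wt x1 ys) as W.
           rewrite Forall_forall in V, W |- *. intros v Hv.
           exists 0%nat, (y :: v). split. reflexivity. split. lia. split.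
           split. constructor; auto. destruct y; exact Hfirst.
           specialize (W v Hv). unfold wt in *; simpl in *. lia.
  - destruct IH as [rest [Hs Hr]].
    exists ((merge x1 x1 :: ones k ++ u) :: map (cons x1) rest). split.
    + intros M. change (ones (S k) ++ u) with (x1 :: (ones k ++ u)).
      simpl stuff1. rewrite !sumS_cons, sumS_map_cons, sumS_map_cons.
      rewrite (csum_ext _ (fun m => Cplus (Cmult (RtoC (INR (S k))) (Cmult (tm x1 m) (nsum (ones (S k) ++ u) (m-1))))
                                          (Cmult (tm x1 m) (sumS rest (m - 1))))).
      2:{ intros m _. rewrite Hs. ring. }
      rewrite csum_plus, csum_scal.
      change (ones (S (S k)) ++ u) with (x1 :: (ones (S k) ++ u)).
      rewrite <- nsum_cons'.
      change (x1 :: ones k ++ u) with (ones (S k) ++ u).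
      rewrite (S_INR (S k)), RtoC_plus. ring.
    + constructor.
      * exists 0%nat, (merge x1 x1 :: ones k ++ u). split. reflexivity. split. lia. split.
        split. constructor. apply valid_merge; apply valid_x1. apply Forall_app; split; auto. apply valid_ones.
        unfold merge; simpl. lia.
        change (wt (merge x1 x1 :: ones k ++ u)) with (2 + wt (ones k ++ u))%nat. rewrite wt_app, wt_ones. lia.
      * apply Forall_map. eapply Forall_impl; [|exact Hr].
        intros w [j [u' [E [Hj [Hg Hw]]]]]. exists (S j), u'. split. rewrite E; reflexivity.
        split. lia. split. auto. unfold wt in *; simpl in *. lia.
Qed.

Definition entry := (nat * Q * list (nat * C))%type.

Definition evalF (F : list entry) (M : nat) : C :=
  fold_right (fun e acc => Cplus (Cmult (RtoC (Q2R (snd (fst e))))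
                                 (Cmult (RtoC (harm M ^ fst (fst e))) (nsum (snd e) M))) acc) (RtoC 0) F.

Definition FormOK (N W : nat) (F : list entry) : Prop :=
  List.Forall (fun e => good N (snd e) /\ (fst (fst e) + wt (snd e))%nat = W) F.

Definition scaleF (q : Q) (F : list entry) : list entry :=
  map (fun e => (fst (fst e), (q * snd (fst e))%Q, snd e)) F.
Definition shiftF (F : list entry) : list entry :=
  map (fun e => (S (fst (fst e)), snd (fst e), snd e)) F.

Lemma evalF_app F1 F2 M : evalF (F1 ++ F2) M = Cplus (evalF F1 M) (evalF F2 M).
Proof. induction F1 as [|e F1 IH]. simpl. ring. simpl. rewrite IH. ring. Qed.

Lemma evalF_scale q F M : evalF (scaleF q F) M = Cmult (RtoC (Q2R q)) (evalF F M).
Proof.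
  induction F as [|e F IH]. simpl. ring. simpl. rewrite IH, Q2R_mult, RtoC_mult. ring.
Qed.

Lemma evalF_shift F M : evalF (shiftF F) M = Cmult (RtoC (harm M)) (evalF F M).
Proof.
  induction F as [|e F IH]. simpl. ring. simpl. rewrite IH. simpl. rewrite RtoC_mult. ring.
Qed.

Lemma FormOK_app N W F1 F2 : FormOK N W F1 -> FormOK N W F2 -> FormOK N W (F1 ++ F2).
Proof. intros; apply Forall_app; auto. Qed.
Lemma FormOK_scale N W q F : FormOK N W F -> FormOK N W (scaleF q F).
Proof. intros H. apply Forall_map. eapply Forall_impl; [|exact H]. simpl. auto. Qed.
Lemma FormOK_shift N W F : FormOK N W F -> FormOK N (S W) (shiftF F).
Proof. intros H. apply Forall_map. eapply Forall_impl; [|exact H]. simpl. intros e [A B]. split; [auto|lia]. Qed.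

Lemma nsum_x1 M : nsum (x1 :: nil) M = RtoC (harm M).
Proof.
  induction M. reflexivity. rewrite nsum_single_S, IHM, harm_S, RtoC_plus. f_equal.
  unfold tm, x1. cbn [fst snd]. rewrite Cpow_1_l, Cpow_1_r. unfold Cdiv. rewrite Cmult_1_l.
  rewrite RtoC_inv. reflexivity. pose proof (INR_S_pos M); lra.
Qed.

Lemma Q2R_one : Q2R 1 = 1.
Proof. unfold Q2R; simpl. field. Qed.

Lemma Q2R_inv_succ k : Q2R (1 # Pos.of_succ_nat k) = / INR (S k).
Proof.
  unfold Q2R; simpl Qnum; simpl Qden. rewrite Zpos_P_of_succ_nat, <- Nat2Z.inj_succ, <- INR_IZR_INZ.
  field. pose proof (INR_S_pos k); lra.
Qed.

Lemma reg N : forall k j u, (j <= k)%nat -> good N u ->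
  exists F, (forall M, nsum (ones j ++ u) M = evalF F M) /\ FormOK N (j + wt u) F.
Proof.
  induction k as [|k IH]; intros j u Hj Hu.
  - assert (j = 0%nat) by lia. subst j.
    exists ((0%nat, 1%Q, u) :: nil). split.
    + intros M. simpl. rewrite Q2R_one. ring.
    + constructor; [|constructor]. simpl. auto.
  - destruct (le_lt_dec j k) as [L|L]. apply IH; auto.
    assert (j = S k) by lia. subst j.
    destruct (IH k u (le_n k) Hu) as [F0 [E0 OK0]].
    destruct (stuff_ones N k u Hu) as [rest [Es Hr]].
    assert (RF : exists Fr, (forall M, sumS rest M = evalF Fr M) /\ FormOK N (S (k + wt u)) Fr).
    { clear Es. induction Hr as [|w rest Hw Hr IHr].
      - exists nil. split. intros; reflexivity. constructor.
      - destruct IHr as [Fr [Er OKr]].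
        destruct Hw as [j [u' [Ew [Hj0 [Hg Hwt]]]]].
        destruct (IH j u' Hj0 Hg) as [Fw [Efw OKw]].
        exists (Fw ++ Fr). split.
        + intros M. rewrite sumS_cons, evalF_app, Er, Ew, Efw. reflexivity.
        + apply FormOK_app; auto. rewrite Ew, wt_app, wt_ones in Hwt. rewrite <- Hwt. exact OKw. }
    destruct RF as [Fr [Er OKr]].
    set (q := (1 # Pos.of_succ_nat k)%Q).
    exists (scaleF q (shiftF F0) ++ scaleF (- q)%Q Fr). split.
    + intros M. rewrite evalF_app, !evalF_scale, evalF_shift, <- Er, <- E0, Q2R_opp.
      pose proof (stuffle x1 (ones k ++ u) M) as St. rewrite Es, nsum_x1 in St.
      unfold q. rewrite Q2R_inv_succ.
      assert (Hk : RtoC (INR (S k)) <> RtoC 0) by (apply INRC_neq0; lia).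
      rewrite RtoC_opp, RtoC_inv. rewrite St. field. exact Hk.
      pose proof (INR_S_pos k); lra.
    + apply FormOK_app; apply FormOK_scale. apply FormOK_shift. exact OK0. exact OKr.
Qed.


Lemma cauchy_lim (u : nat -> R) (e : nat -> R) (K : R) : 0 <= K ->
  is_lim_seq e 0 -> (forall M, (1 <= M)%nat -> 0 <= e M) ->
  (forall M N, (1 <= M)%nat -> (M <= N)%nat -> Rabs (u N - u M) <= K * e M) ->
  exists l, forall M, (1 <= M)%nat -> Rabs (u M - l) <= K * e M.
Proof.
  intros HK He Hpos Hc.
  assert (Hcau : ex_lim_seq_cauchy u).
  { intros eps. pose proof (lim_scal e (2 * K) He) as L. apply is_lim_seq_spec in L.
    destruct (L eps) as [M0 HM0]. exists (S M0). intros n m Hn Hm.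
    specialize (HM0 (S M0) ltac:(lia)). rewrite Rminus_0_r in HM0.
    pose proof (Hc (S M0) n ltac:(lia) Hn). pose proof (Hc (S M0) m ltac:(lia) Hm).
    pose proof (Rle_abs (2 * K * e (S M0))).
    replace (u n - u m) with ((u n - u (S M0)) - (u m - u (S M0))) by ring.
    eapply Rle_lt_trans. apply Rabs_triang. rewrite Rabs_Ropp. lra. }
  destruct (proj2 (ex_lim_seq_cauchy_corr u) Hcau) as [l Hl].
  exists l. intros M HM.
  assert (Hl' : is_lim_seq (fun n => Rabs (u n - u M)) (Rabs (l - u M))).
  { apply (is_lim_seq_abs _ (l - u M)). apply is_lim_seq_minus'. auto. apply is_lim_seq_const. }
  assert (Rbar_le (Rabs (l - u M)) (K * e M)).
  { apply is_lim_seq_le_loc with (fun n => Rabs (u n - u M)) (fun _ => K * e M); auto.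
    exists M. intros n Hn. apply Hc; auto. apply is_lim_seq_const. }
  simpl in H. rewrite Rabs_minus_sym. exact H.
Qed.

Lemma sqrt2_le_2 : sqrt 2 <= 2.
Proof.
  rewrite <- (sqrt_square 2) at 2 by lra. apply sqrt_le_1_alt. lra.
Qed.

Lemma cauchy_limC (u : nat -> C) (e : nat -> R) (K : R) : 0 <= K ->
  is_lim_seq e 0 -> (forall M, (1 <= M)%nat -> 0 <= e M) ->
  (forall M N, (1 <= M)%nat -> (M <= N)%nat -> Cmod (Cminus (u N) (u M)) <= K * e M) ->
  exists L, forall M, (1 <= M)%nat -> Cmod (Cminus (u M) L) <= (2 * K) * e M.
Proof.
  intros HK He Hpos Hc.
  destruct (cauchy_lim (fun n => fst (u n)) e K HK He Hpos) as [lr Hr].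
  { intros M N HM HMN. eapply Rle_trans; [|apply (Hc M N HM HMN)].
    eapply Rle_trans; [|apply Rmax_Cmod]. apply Rmax_l. }
  destruct (cauchy_lim (fun n => snd (u n)) e K HK He Hpos) as [li Hi].
  { intros M N HM HMN. eapply Rle_trans; [|apply (Hc M N HM HMN)].
    eapply Rle_trans; [|apply Rmax_Cmod]. apply Rmax_r. }
  exists (lr, li). intros M HM. eapply Rle_trans. apply Cmod_2Rmax.
  specialize (Hr M HM). specialize (Hi M HM). simpl in Hr, Hi.
  assert (Rmax (Rabs (fst (Cminus (u M) (lr, li)))) (Rabs (snd (Cminus (u M) (lr, li)))) <= K * e M).
  { apply Rmax_lub; simpl; auto. }
  pose proof sqrt2_le_2. pose proof (sqrt_pos 2).
  pose proof (Hpos M HM).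
  assert (0 <= Rmax (Rabs (fst (Cminus (u M) (lr, li)))) (Rabs (snd (Cminus (u M) (lr, li))))).
  { eapply Rle_trans. apply Rabs_pos. apply Rmax_l. }
  nra.
Qed.

Definition isq (m : nat) : R := / sqrt (INR m).

Lemma sqrt_INR_pos m : (1 <= m)%nat -> 0 < sqrt (INR m).
Proof. intros; apply sqrt_lt_R0, INRpos; auto. Qed.

Lemma isq_pos m : (1 <= m)%nat -> 0 < isq m.
Proof. intros; apply Rinv_0_lt_compat, sqrt_INR_pos; auto. Qed.

Lemma isq_nonneg m : 0 <= isq m.
Proof. destruct m. unfold isq; simpl. rewrite sqrt_0, Rinv_0. lra. left; apply isq_pos; lia. Qed.

Lemma isq_mono m n : (1 <= m)%nat -> (m <= n)%nat -> isq n <= isq m.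
Proof.
  intros. unfold isq. apply Rinv_le_contravar. apply sqrt_INR_pos; auto.
  apply sqrt_le_1_alt. apply le_INR; auto.
Qed.

Lemma lim_isq : is_lim_seq isq 0.
Proof.
  apply lim_squeeze with (v := fun n => / q4 n). apply lim_invq.
  intros n Hn. rewrite Rabs_right by (apply Rle_ge, isq_nonneg).
  unfold isq. pose proof (q4_ge1 n Hn). apply Rinv_le_contravar. lra.
  pose proof (q4_pow4 n). unfold q4 in *.
  rewrite <- (sqrt_sqrt (sqrt (INR n))) at 2 by apply sqrt_pos.
  assert (1 <= sqrt (sqrt (INR n))) by lra. nra.
Qed.

Lemma tele_ineq m : (2 <= m)%nat -> / (INR m * sqrt (INR m)) <= 2 * (isq (m - 1) - isq m).
Proof.
  intros Hm. unfold isq.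
  set (a := sqrt (INR (m - 1))). set (b := sqrt (INR m)).
  assert (Ha : 0 < a) by (apply sqrt_INR_pos; lia).
  assert (Hb : 0 < b) by (apply sqrt_INR_pos; lia).
  assert (Eb : b * b = INR m) by (apply sqrt_sqrt, pos_INR).
  assert (Ea : a * a = INR m - 1).
  { unfold a. rewrite sqrt_sqrt by apply pos_INR. rewrite minus_INR by lia. simpl. ring. }
  assert (Hab : a < b) by nra.
  rewrite <- Eb.
  assert (E : / a - / b = / (a * b * (a + b))).
  { assert (Hd : (b - a) * (a + b) = 1) by nra.
    apply (Rmult_eq_reg_r (a * b * (a + b))). rewrite Rinv_l by nra.
    replace ((/ a - / b) * (a * b * (a + b))) with ((b - a) * (a + b)) by (field; lra). exact Hd. nra. }
  rewrite E.
  assert (a * b * (a + b) <= 2 * (b * b * b)) by nra.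
  replace (b * b * b) with (b * b * b) by ring.
  apply Rle_trans with (2 * / (2 * (b * b * b))).
  - rewrite Rinv_mult. right. field. nra.
  - apply Rmult_le_compat_l. lra. apply Rinv_le_contravar. nra. auto.
Qed.

Lemma tele_sum (f : nat -> C) K M N : 0 <= K -> (1 <= M)%nat -> (M <= N)%nat ->
  (forall m, (M < m)%nat -> (m <= N)%nat -> Cmod (f m) <= K * (isq (m - 1) - isq m)) ->
  Cmod (Cminus (csum f N) (csum f M)) <= K * isq M.
Proof.
  intros HK HM HMN Hf.
  assert (Cmod (Cminus (csum f N) (csum f M)) <= K * (isq M - isq N)).
  { induction HMN as [|N HMN IH].
    - replace (Cminus (csum f M) (csum f M)) with (RtoC 0) by ring. rewrite Cmod_0. lra.
    - rewrite csum_S. replace (Cminus (Cplus (csum f N) (f (S N))) (csum f M))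
        with (Cplus (Cminus (csum f N) (csum f M)) (f (S N))) by ring.
      eapply Rle_trans. apply Cmod_triangle.
      pose proof (IH ltac:(intros; apply Hf; lia)).
      pose proof (Hf (S N) ltac:(lia) ltac:(lia)). replace (S N - 1)%nat with N in H0 by lia. lra. }
  pose proof (isq_nonneg N). nra.
Qed.

Lemma sqrt_le_id m : (1 <= m)%nat -> sqrt (INR m) <= INR m.
Proof.
  intros Hm. pose proof (INR_ge1 m Hm).
  assert (1 <= sqrt (INR m)) by (rewrite <- sqrt_1; apply sqrt_le_1_alt; lra).
  rewrite <- (sqrt_sqrt (INR m)) at 2 by lra. nra.
Qed.

Lemma harm_sqrt_bound d : exists C, 0 < C /\ forall n m, (n <= m)%nat -> (1 <= m)%nat ->
  harm n ^ d <= C * sqrt (INR m).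
Proof.
  destruct (harm_pow_bound d) as [C [HC B]]. exists C. split; auto. intros n m Hnm Hm.
  apply Rle_trans with (harm m ^ d). apply pow_incr. split. apply harm_ge0. apply harm_mono; auto.
  eapply Rle_trans. apply B; auto. apply Rmult_le_compat_l. lra.
  unfold q4. apply sqrt_le_1_alt. apply sqrt_le_id; auto.
Qed.

Lemma nsum_sqrt_bound N r : (1 <= N)%nat -> List.Forall (valid N) r ->
  exists C, 0 < C /\ forall n m, (n <= m)%nat -> (1 <= m)%nat -> Cmod (nsum r n) <= C * sqrt (INR m).
Proof.
  intros HN Hr. destruct (harm_sqrt_bound (length r)) as [C [HC B]]. exists C. split; auto.
  intros n m Hnm Hm. eapply Rle_trans. apply (nsum_bound N r n HN Hr). apply B; auto.
Qed.

Lemma tm_mod N x m : (1 <= N)%nat -> valid N x -> (1 <= m)%nat -> Cmod (tm x m) = / (INR m ^ fst x).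
Proof.
  intros HN [Hs Ha] Hm. destruct x as [s a]; simpl in *. unfold tm; simpl.
  rewrite Cmod_div by (apply Cpow_nz, INRC_neq0; auto).
  rewrite !Cmod_pow, (cmod_root N a HN Ha), pow1, Cmod_R.
  pose proof (INRpos m Hm). rewrite Rabs_right by lra. unfold Rdiv. ring.
Qed.

Lemma inv_msqrt m : (1 <= m)%nat -> sqrt (INR m) * / (INR m ^ 2) = / (INR m * sqrt (INR m)).
Proof.
  intros Hm. pose proof (sqrt_INR_pos m Hm). pose proof (sqrt_sqrt (INR m) (pos_INR m)).
  set (b := sqrt (INR m)) in *.
  replace (INR m ^ 2) with (b * b * (b * b)) by (rewrite H0; ring).
  replace (INR m * b) with (b * b * b) by (rewrite H0; ring). field. lra.
Qed.

Definition CauchyB (u : nat -> C) : Prop :=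
  exists K, 0 <= K /\ forall M N, (1 <= M)%nat -> (M <= N)%nat -> Cmod (Cminus (u N) (u M)) <= K * isq M.

Lemma conv_s2 N s a r : (1 <= N)%nat -> valid N (s, a) -> (2 <= s)%nat -> List.Forall (valid N) r ->
  CauchyB (nsum ((s, a) :: r)).
Proof.
  intros HN Hx Hs Hr. destruct (nsum_sqrt_bound N r HN Hr) as [C [HC B]].
  exists (2 * C). split. lra. intros M N' HM HMN.
  rewrite !nsum_cons. apply tele_sum; auto. lra.
  intros m Hm1 Hm2. rewrite Cmod_mult, (tm_mod N (s, a) m HN Hx ltac:(lia)). simpl fst.
  pose proof (B (m - 1)%nat m ltac:(lia) ltac:(lia)) as Bm.
  pose proof (INR_ge1 m ltac:(lia)) as Im.
  assert (P1 : / (INR m ^ s) <= / (INR m ^ 2)).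
  { apply Rinv_le_contravar. apply pow_lt; lra. apply Rle_pow; auto. }
  assert (P0 : 0 <= / (INR m ^ s)) by (left; apply Rinv_0_lt_compat, pow_lt; lra).
  apply Rle_trans with (/ (INR m ^ 2) * (C * sqrt (INR m))).
  apply Rmult_le_compat; auto. apply Cmod_ge_0.
  rewrite Rmult_comm, Rmult_assoc, inv_msqrt by lia.
  pose proof (tele_ineq m ltac:(lia)). nra.
Qed.

Lemma conv_abel N a r : (1 <= N)%nat -> valid N (1%nat, a) -> a <> RtoC 1 -> List.Forall (valid N) r ->
  CauchyB (nsum ((1%nat, a) :: r)).
Proof.
  intros HN Hx Ha1 Hr.
  destruct (harm_sqrt_bound (length r)) as [C [HC B]].
  assert (Bn : forall n m, (n <= m)%nat -> (1 <= m)%nat -> Cmod (nsum r n) <= C * sqrt (INR m)).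
  { intros n m Hnm Hm. eapply Rle_trans. apply (nsum_bound N r n HN Hr). apply B; auto. }
  assert (Hamod : Cmod a = 1) by (destruct Hx as [_ E]; exact (cmod_root N a HN E)).
  assert (Hapow : forall n, Cmod (Cpow a n) = 1) by (intros; rewrite Cmod_pow, Hamod; apply pow1).
  set (g := fun m => Cmult (nsum r (m - 1)) (RtoC (/ INR m))).
  set (h := fun m => Cmult (Cpow a m) (Cminus (g m) (g (m - 1)%nat))).
  set (f := fun m => Cmult (tm (1%nat, a) m) (nsum r (m - 1))).
  assert (Ef : forall m, (1 <= m)%nat -> f m = Cmult (Cpow a m) (g m)).
  { intros m Hm. unfold f, g, tm. simpl fst; simpl snd. rewrite Cpow_1_r. unfold Cdiv.
    rewrite RtoC_inv. ring. pose proof (INRpos m Hm); lra. }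
  assert (Hg : forall m, (1 <= m)%nat -> Cmod (g m) <= C * isq m).
  { intros m Hm. unfold g. rewrite Cmod_mult, Cmod_R.
    pose proof (INRpos m Hm). rewrite Rabs_right by (apply Rle_ge; left; apply Rinv_0_lt_compat; lra).
    eapply Rle_trans. apply Rmult_le_compat_r. left; apply Rinv_0_lt_compat; lra. apply (Bn (m-1)%nat m); lia.
    unfold isq. pose proof (sqrt_INR_pos m Hm). pose proof (sqrt_sqrt (INR m) (pos_INR m)).
    right. rewrite <- H1 at 2. field. lra. }
  assert (Hh : forall m, (2 <= m)%nat -> Cmod (h m) <= (8 * C) * (isq (m - 1) - isq m)).
  { intros m Hm. unfold h. rewrite Cmod_mult, Hapow, Rmult_1_l.
    unfold g. replace (m - 1 - 1)%nat with (m - 2)%nat by lia.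
    set (x := INR m). set (y := INR (m - 1)). set (sq := sqrt x).
    assert (Hy : y = x - 1) by (unfold y, x; rewrite minus_INR by lia; simpl; ring).
    assert (Hx2 : 2 <= x) by (unfold x; apply (le_INR 2 m) in Hm; simpl in Hm; lra).
    assert (Hsq : 0 < sq) by (apply sqrt_lt_R0; lra).
    replace (Cminus (Cmult (nsum r (m - 1)) (RtoC (/ x))) (Cmult (nsum r (m - 2)) (RtoC (/ y))))
      with (Cplus (Cmult (Cminus (nsum r (m - 1)) (nsum r (m - 1 - 1))) (RtoC (/ x)))
                  (Cmult (nsum r (m - 2)) (RtoC (/ x - / y))))
      by (replace (m - 1 - 1)%nat with (m - 2)%nat by lia; rewrite RtoC_minus; ring).
    eapply Rle_trans. apply Cmod_triangle. rewrite !Cmod_mult, !Cmod_R.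
    pose proof (nsum_diff_bound N r (m - 1) HN Hr ltac:(lia)) as D1.
    fold y in D1.
    assert (D1' : harm (m - 1) ^ length r <= C * sq) by (apply B; lia).
    assert (D2 : Cmod (nsum r (m - 2)) <= C * sq) by (apply Bn; lia).
    assert (Ex : Rabs (/ x) = / x) by (apply Rabs_right; apply Rle_ge; left; apply Rinv_0_lt_compat; lra).
    assert (Exy : Rabs (/ x - / y) = / (x * y)).
    { rewrite Rabs_left1. rewrite Hy. field. split; lra. rewrite Hy. apply Rle_minus. apply Rinv_le_contravar; lra. }
    rewrite Ex, Exy.
    assert (Iy : 0 < / y) by (apply Rinv_0_lt_compat; lra).
    assert (Ix : 0 < / x) by (apply Rinv_0_lt_compat; lra).
    assert (S1 : Cmod (Cminus (nsum r (m - 1)) (nsum r (m - 1 - 1))) * / x <= C * sq * / (x * y)).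
    { apply Rle_trans with ((C * sq * / y) * / x). apply Rmult_le_compat_r; [lra|].
      eapply Rle_trans; [exact D1|]. apply Rmult_le_compat_r; lra. right; rewrite Rinv_mult; ring. }
    assert (S2 : Cmod (nsum r (m - 2)) * / (x * y) <= C * sq * / (x * y)).
    { apply Rmult_le_compat_r. left; apply Rinv_0_lt_compat; nra. exact D2. }
    assert (S3 : / (x * y) <= 2 * / (x ^ 2)).
    { replace (2 * / x ^ 2) with (/ (x ^ 2 / 2)) by (field; lra).
      apply Rinv_le_contravar. nra. nra. }
    pose proof (inv_msqrt m ltac:(lia)) as IM. fold x sq in IM.
    pose proof (tele_ineq m Hm) as TI. fold x sq in TI.
    assert (0 <= C * sq) by nra.
    apply Rle_trans with (4 * C * (sq * / x ^ 2)).
    { apply Rle_trans with (2 * (C * sq * / (x * y))). lra.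
      apply Rle_trans with (2 * (C * sq * (2 * / x ^ 2))). apply Rmult_le_compat_l. lra.
      apply Rmult_le_compat_l; auto. right; ring. }
    rewrite IM. nra. }
  assert (Hid : forall M k, Cmult (Cminus (RtoC 1) a) (Cminus (csum f (S M + k)) (csum f M)) =
     Cplus (Cminus (Cmult (Cpow a (S M)) (g (S M))) (Cmult (Cpow a (S (S M + k))) (g (S M + k)%nat)))
           (Cminus (csum h (S M + k)) (csum h (S M)))).
  { intros M k. induction k as [|k IH].
    - rewrite Nat.add_0_r, csum_S, Ef by lia. rewrite (Cpow_S a (S M)). ring.
    - replace (S M + S k)%nat with (S (S M + k)) by lia.
      set (n := (S M + k)%nat) in *.
      rewrite (csum_S f n), (csum_S h n).
      rewrite (Ef (S n)) by lia.
      assert (Eh : h (S n) = Cmult (Cpow a (S n)) (Cminus (g (S n)) (g n))).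
      { unfold h. replace (S n - 1)%nat with n by lia. reflexivity. }
      rewrite Eh.
      replace (Cminus (Cplus (csum f n) (Cmult (Cpow a (S n)) (g (S n)))) (csum f M))
        with (Cplus (Cminus (csum f n) (csum f M)) (Cmult (Cpow a (S n)) (g (S n)))) by ring.
      rewrite Cmult_plus_distr_l, IH.
      rewrite (Cpow_S a (S n)). ring. }
  assert (Hd : 0 < Cmod (Cminus (RtoC 1) a)).
  { apply Cmod_gt_0. intros E. apply Ha1. 
    replace a with (Cminus (RtoC 1) (Cminus (RtoC 1) a)) by ring. rewrite E. ring. }
  exists (10 * C / Cmod (Cminus (RtoC 1) a)). split.
  { apply Rdiv_le_0_compat; lra. }
  intros M N' HM HMN. change (nsum ((1%nat, a) :: r)) with (csum f).
  destruct (Nat.eq_dec M N') as [E|E].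
  { subst. replace (Cminus (csum f N') (csum f N')) with (RtoC 0) by ring. rewrite Cmod_0.
    pose proof (isq_nonneg N'). apply Rmult_le_pos; auto. apply Rdiv_le_0_compat; lra. }
  replace N' with (S M + (N' - S M))%nat by lia.
  set (k := (N' - S M)%nat).
  apply (Rmult_le_reg_l (Cmod (Cminus (RtoC 1) a))); auto.
  rewrite <- Cmod_mult, Hid.
  replace (Cmod (Cminus (RtoC 1) a) * (10 * C / Cmod (Cminus (RtoC 1) a) * isq M)) with (10 * C * isq M)
    by (field; lra).
  eapply Rle_trans. apply Cmod_triangle.
  eapply Rle_trans. apply Rplus_le_compat_r. apply Cmod_triangle.
  rewrite Cmod_opp, !Cmod_mult, !Hapow, !Rmult_1_l.
  pose proof (Hg (S M) ltac:(lia)). pose proof (Hg (S M + k)%nat ltac:(lia)).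
  pose proof (isq_mono M (S M) HM ltac:(lia)). pose proof (isq_mono M (S M + k)%nat HM ltac:(lia)).
  assert (Cmod (Cminus (csum h (S M + k)) (csum h (S M))) <= 8 * C * isq (S M)).
  { apply tele_sum. lra. lia. lia. intros m Hm1 Hm2. apply Hh. lia. }
  nra.
Qed.

Lemma conv N v : (1 <= N)%nat -> good N v ->
  exists L K, 0 <= K /\ forall M, (1 <= M)%nat -> Cmod (Cminus (nsum v M) L) <= K * isq M.
Proof.
  intros HN [Hv Hf]. destruct v as [|[s a] r].
  - exists (RtoC 1), 0. split. lra. intros M HM. simpl nsum.
    replace (Cminus (RtoC 1) (RtoC 1)) with (RtoC 0) by ring. rewrite Cmod_0. lra.
  - inversion Hv as [|? ? Hx Hr]; subst.
    assert (CB : CauchyB (nsum ((s, a) :: r))).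
    { destruct Hx as [Hs Ha]. simpl in Hs.
      destruct (Nat.eq_dec s 1) as [E|E].
      + subst s. apply (conv_abel N a r HN). split; auto. intros Ea. apply Hf. split; auto. exact Hr.
      + apply conv_s2 with N; auto. split; auto. lia. }
    destruct CB as [K [HK HB]].
    destruct (cauchy_limC (nsum ((s, a) :: r)) isq K HK lim_isq (fun M _ => isq_nonneg M) HB) as [L HL].
    exists L, (2 * K). split. lra. exact HL.
Qed.


Lemma de_moivre t n : Cpow (cos t, sin t) n = (cos (INR n * t), sin (INR n * t)).
Proof.
  induction n as [|n IH].
  - simpl. rewrite Rmult_0_l, cos_0, sin_0. reflexivity.
  - rewrite Cpow_S, IH. rewrite S_INR. unfold Cmult; simpl.
    replace ((INR n + 1) * t) with (t + INR n * t) by ring.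
    rewrite cos_plus, sin_plus. f_equal; ring.
Qed.

Lemma IZR_nat z : exists k, IZR z = INR k \/ IZR z = - INR k.
Proof.
  destruct (Z_le_gt_dec 0 z) as [H|H].
  - exists (Z.to_nat z). left. rewrite INR_IZR_INZ, Z2Nat.id by lia. reflexivity.
  - exists (Z.to_nat (- z)). right. rewrite INR_IZR_INZ, Z2Nat.id by lia. rewrite opp_IZR. ring.
Qed.

Lemma cos_sin_2PIk z : cos (2 * PI * IZR z) = 1 /\ sin (2 * PI * IZR z) = 0.
Proof.
  destruct (IZR_nat z) as [k [E|E]]; rewrite E.
  - pose proof (cos_period 0 k). pose proof (sin_period 0 k).
    rewrite Rplus_0_l, cos_0 in H. rewrite Rplus_0_l, sin_0 in H0.
    replace (2 * PI * INR k) with (2 * INR k * PI) by ring. auto.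
  - pose proof (cos_period 0 k). pose proof (sin_period 0 k).
    rewrite Rplus_0_l, cos_0 in H. rewrite Rplus_0_l, sin_0 in H0.
    replace (2 * PI * - INR k) with (- (2 * INR k * PI)) by ring.
    rewrite cos_neg, sin_neg, H, H0. split; ring.
Qed.

Lemma mu_pow_root N z : (1 <= N)%nat -> Cpow (mu_pow N z) N = RtoC 1.
Proof.
  intros HN. unfold mu_pow. rewrite de_moivre.
  pose proof (INRpos N HN).
  replace (INR N * (2 * PI * IZR z / INR N)) with (2 * PI * IZR z) by (field; lra).
  destruct (cos_sin_2PIk z) as [A B]. rewrite A, B. reflexivity.
Qed.

Lemma colors_valid N prev l : (1 <= N)%nat -> List.Forall (fun p => (1 <= fst p)%nat) l ->
  List.Forall (valid N) (colors N prev l).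
Proof.
  intros HN Hl. revert prev. induction Hl as [|[s i] l Hs Hl IH]; intros prev; simpl.
  constructor. constructor. split; simpl; auto. apply mu_pow_root; auto. apply IH.
Qed.

Lemma colors_wt N prev l : wt (colors N prev l) = weight l.
Proof.
  revert prev. induction l as [|[s i] l IH]; intros prev. reflexivity.
  simpl colors. change (wt ((s, mu_pow N (i - prev)) :: colors N i l)) with (s + wt (colors N i l))%nat.
  rewrite IH. reflexivity.
Qed.

Lemma decompose N w : List.Forall (valid N) w -> exists k u, w = ones k ++ u /\ good N u.
Proof.
  induction 1 as [|x w Hx Hw IH].
  - exists 0%nat, nil. split. reflexivity. split. constructor. exact I.
  - destruct (classic (x = x1)) as [E|E].
    + destruct IH as [k [u [Eu Gu]]]. exists (S k), u. split; auto. rewrite Eu, E. reflexivity.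
    + exists 0%nat, (x :: w). split. reflexivity. split. constructor; auto.
      destruct x as [s a]. intros [Es Ea]. apply E. subst. reflexivity.
Qed.

Lemma pow_diff h T j : 0 <= T <= h -> 0 <= h ^ j - T ^ j <= INR j * (h - T) * h ^ (j - 1).
Proof.
  intros [HT Hh]. induction j as [|j IH].
  - simpl. lra.
  - replace (S j - 1)%nat with j by lia.
    destruct j as [|j].
    + simpl. lra.
    + replace (S j - 1)%nat with j in IH by lia.
      set (A := h ^ S j) in *. set (B := T ^ S j) in *.
      assert (BA : B <= A) by (apply pow_incr; lra).
      assert (B0 : 0 <= B) by (apply pow_le; lra).
      assert (Eh : h ^ S (S j) = h * A) by reflexivity.
      assert (ET : T ^ S (S j) = T * B) by reflexivity.
      assert (Eh1 : A = h * h ^ j) by reflexivity.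
      rewrite Eh, ET. rewrite (S_INR (S j)).
      assert (0 <= h ^ j) by (apply pow_le; lra).
      assert (0 <= INR (S j)) by apply pos_INR.
      assert (K : h * (A - B) <= INR (S j) * (h - T) * A).
      { rewrite Eh1. replace (INR (S j) * (h - T) * (h * h ^ j)) with (h * (INR (S j) * (h - T) * h ^ j)) by ring.
        apply Rmult_le_compat_l; lra. }
      split; nra.
Qed.

Lemma q4_isq M : (1 <= M)%nat -> q4 M * isq M = / q4 M.
Proof.
  intros HM. pose proof (q4_ge1 M HM). unfold isq. unfold q4 in *.
  pose proof (sqrt_sqrt (sqrt (INR M)) (sqrt_pos _)). 
  rewrite <- H0 at 2. field. lra.
Qed.

Lemma q4_over_M M : (1 <= M)%nat -> q4 M * / INR M <= / q4 M.
Proof.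
  intros HM. pose proof (q4_ge1 M HM). pose proof (q4_pow4 M).
  rewrite <- H0. replace (q4 M * / q4 M ^ 4) with (/ q4 M * / (q4 M ^ 2)) by (field; lra).
  assert (1 <= q4 M ^ 2) by nra.
  assert (0 < / q4 M) by (apply Rinv_0_lt_compat; lra).
  assert (/ (q4 M ^ 2) <= 1) by (rewrite <- Rinv_1; apply Rinv_le_contravar; lra).
  nra.
Qed.

Definition TT (M : nat) : R := ln (INR M) + EulerGamma.

Lemma TT_bounds M : (1 <= M)%nat -> 0 <= TT M <= harm M /\ harm M - TT M <= / INR M.
Proof.
  intros HM. pose proof (euler_bound M HM). pose proof (harm_ge1 M HM).
  pose proof (INR_ge1 M HM). assert (/ INR M <= 1) by (rewrite <- Rinv_1; apply Rinv_le_contravar; lra).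
  unfold TT. lra.
Qed.

Lemma entry_lim N j q v : (1 <= N)%nat -> good N v -> exists L,
  is_lim_seq (fun M => Cmod (Cminus (nsum v M) L)) 0 /\
  is_lim_seq (fun M => Cmod (Cminus (Cmult (RtoC (Q2R q)) (Cmult (RtoC (harm M ^ j)) (nsum v M)))
                                    (Cmult (Cmult (RtoC (Q2R q)) L) (Cpow (RtoC (ln (INR M) + EulerGamma)) j)))) 0.
Proof.
  intros HN Hv. destruct (conv N v HN Hv) as [L [K [HK HB]]]. exists L. split.
  - apply lim_squeeze with (fun M => K * isq M). apply lim_scal, lim_isq.
    intros n Hn. rewrite Rabs_right by (apply Rle_ge, Cmod_ge_0). auto.
  - destruct (harm_pow_bound j) as [Cj [HCj Bj]].
    destruct (harm_pow_bound (j - 1)) as [Cj' [HCj' Bj']].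
    apply lim_squeeze with (fun M => (Rabs (Q2R q) * (Cj * K + INR j * Cj' * Cmod L)) * / q4 M).
    apply lim_scal, lim_invq.
    intros M HM. rewrite Rabs_right by (apply Rle_ge, Cmod_ge_0).
    fold (TT M). rewrite <- RtoC_pow.
    set (h := harm M) in *. set (T := TT M) in *.
    replace (Cminus (Cmult (RtoC (Q2R q)) (Cmult (RtoC (h ^ j)) (nsum v M))) (Cmult (Cmult (RtoC (Q2R q)) L) (RtoC (T ^ j))))
      with (Cmult (RtoC (Q2R q)) (Cplus (Cmult (RtoC (h ^ j)) (Cminus (nsum v M) L)) (Cmult (RtoC (h ^ j - T ^ j)) L)))
      by (rewrite RtoC_minus; ring).
    rewrite Cmod_mult, Cmod_R. rewrite Rmult_assoc. apply Rmult_le_compat_l. apply Rabs_pos.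
    eapply Rle_trans. apply Cmod_triangle. rewrite !Cmod_mult, !Cmod_R.
    destruct (TT_bounds M HM) as [[T0 Th] HhT].
    change (TT M) with T in T0, Th, HhT. change (harm M) with h in Th, HhT.
    pose proof (pow_diff h T j (conj T0 Th)) as [D0 D1].
    pose proof (Bj M HM) as B1. pose proof (Bj' M HM) as B2. fold h in B1, B2.
    pose proof (HB M HM) as B3.
    assert (0 <= h ^ j) by (apply pow_le; pose proof (harm_ge0 M); unfold h; lra).
    rewrite (Rabs_right (h ^ j)) by lra. rewrite (Rabs_right (h ^ j - T ^ j)) by lra.
    pose proof (q4_isq M HM). pose proof (q4_over_M M HM).
    pose proof (q4_ge1 M HM). assert (0 < / q4 M) by (apply Rinv_0_lt_compat; lra).
    pose proof (isq_pos M HM). pose proof (inv_INRpos M HM).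
    pose proof (Cmod_ge_0 (Cminus (nsum v M) L)). pose proof (Cmod_ge_0 L).
    assert (0 <= INR j) by apply pos_INR.
    assert (0 <= h ^ (j - 1)) by (apply pow_le; pose proof (harm_ge0 M); unfold h; lra).
    assert (A1 : h ^ j * Cmod (Cminus (nsum v M) L) <= Cj * K * / q4 M).
    { apply Rle_trans with (Cj * q4 M * (K * isq M)). apply Rmult_le_compat; auto.
      replace (Cj * q4 M * (K * isq M)) with (Cj * K * (q4 M * isq M)) by ring. rewrite H0. lra. }
    assert (A2 : (h ^ j - T ^ j) * Cmod L <= INR j * Cj' * Cmod L * / q4 M).
    { apply Rle_trans with (INR j * / INR M * (Cj' * q4 M) * Cmod L).
      apply Rmult_le_compat_r; auto. eapply Rle_trans. exact D1.
      apply Rmult_le_compat. apply Rmult_le_pos; lra. lra. apply Rmult_le_compat_l; lra. exact B2.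
      replace (INR j * / INR M * (Cj' * q4 M) * Cmod L) with (INR j * Cj' * Cmod L * (q4 M * / INR M)) by ring.
      apply Rmult_le_compat_l. apply Rmult_le_pos; auto. nra. auto. }
    lra.
Qed.

Definition foldT (ta : list (nat * C)) (M : nat) : C :=
  fold_right (fun p acc => Cplus (Cmult (snd p) (Cpow (RtoC (ln (INR M) + EulerGamma)) (fst p))) acc) (RtoC 0) ta.

Lemma form_lim N W F : (1 <= N)%nat -> (1 <= W)%nat -> FormOK N W F ->
  exists ta c, List.Forall (fun p => (1 <= fst p)%nat) ta /\ in_CMZV N W c /\
    is_lim_seq (fun M => Cmod (Cminus (evalF F M) (Cplus (foldT ta M) c))) 0.
Proof.
  intros HN HW HF. induction HF as [|[[j q] v] F [Hg Hwt] HF IH].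
  - exists nil, (RtoC 0). split. constructor. split.
    + exists nil. split. constructor. reflexivity.
    + apply lim_squeeze with (fun _ => 0). apply is_lim_seq_const.
      intros n _. simpl. replace (Cminus (RtoC 0) (Cplus (RtoC 0) (RtoC 0))) with (RtoC 0) by ring.
      rewrite Cmod_0, Rabs_R0. lra.
  - destruct IH as [ta [c [Hta [[lst [Hlst Ec]] Hlim]]]].
    simpl in Hwt. destruct (entry_lim N j q v HN Hg) as [L [HL Hterm]].
    set (term := fun M => Cmult (RtoC (Q2R q)) (Cmult (RtoC (harm M ^ j)) (nsum v M))).
    assert (Eev : forall M, evalF (((j, q), v) :: F) M = Cplus (term M) (evalF F M)) by reflexivity.
    destruct j as [|j].
    + exists ta, (Cplus (Cmult (RtoC (Q2R q)) L) c). split; auto. split.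
      * exists (((q, v), L) :: lst). split.
        -- constructor; auto. split.
           ++ destruct Hg as [Hv Hf]. split. exact Hv. split. exact Hwt.
              destruct v as [|[s a] r]. simpl in Hwt. lia. exact Hf.
           ++ exact HL.
        -- simpl. rewrite Ec. reflexivity.
      * apply lim_squeeze with (fun M => Cmod (Cminus (term M) (Cmult (Cmult (RtoC (Q2R q)) L) (Cpow (RtoC (ln (INR M) + EulerGamma)) 0)))
                                  + Cmod (Cminus (evalF F M) (Cplus (foldT ta M) c))).
        apply lim_plus0; auto.
        intros M _. rewrite Rabs_right by (apply Rle_ge, Cmod_ge_0). rewrite Eev.
        eapply Rle_trans; [|apply Cmod_triangle]. right. f_equal. simpl Cpow. ring.
    + exists ((S j, Cmult (RtoC (Q2R q)) L) :: ta), c. split. constructor; auto. simpl; lia. split.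
      * exists lst. split; auto.
      * apply lim_squeeze with (fun M => Cmod (Cminus (term M) (Cmult (Cmult (RtoC (Q2R q)) L) (Cpow (RtoC (ln (INR M) + EulerGamma)) (S j))))
                                  + Cmod (Cminus (evalF F M) (Cplus (foldT ta M) c))).
        apply lim_plus0; auto.
        intros M _. rewrite Rabs_right by (apply Rle_ge, Cmod_ge_0). rewrite Eev.
        eapply Rle_trans; [|apply Cmod_triangle]. right. f_equal. 
        assert (Ef : foldT ((S j, Cmult (RtoC (Q2R q)) L) :: ta) M = Cplus (Cmult (Cmult (RtoC (Q2R q)) L) (Cpow (RtoC (ln (INR M) + EulerGamma)) (S j))) (foldT ta M)) by reflexivity.
        rewrite Ef. ring.
Qed.

Theorem proposition2p3 (N : nat) (l : list (nat * Z)) :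
  (1 <= N)%nat -> l <> nil -> List.Forall (fun p => (1 <= fst p)%nat) l ->
  exists (ta : list (nat * C)) (c : C),
    List.Forall (fun p => (1 <= fst p)%nat) ta /\
    in_CMZV N (weight l) c /\
    is_lim_seq
      (fun M : nat =>
         Cmod (Cminus (H N l M)
           (Cplus (fold_right (fun p acc =>
                      Cplus (Cmult (snd p) (Cpow (RtoC (ln (INR M) + EulerGamma)) (fst p))) acc)
                    (RtoC 0) ta)
                  c)))
      0.
Proof.
  intros HN Hnil Hl.
  pose proof (colors_valid N 0%Z l HN Hl) as Hv.
  destruct (decompose N _ Hv) as [k [u [Ew Hu]]].
  destruct (reg N k k u (le_n k) Hu) as [F [EF OKF]].
  assert (HW : (k + wt u)%nat = weight l).
  { rewrite <- (colors_wt N 0%Z l), Ew, wt_app, wt_ones. reflexivity. }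
  rewrite HW in OKF.
  assert (HW1 : (1 <= weight l)%nat).
  { destruct l as [|[s i] l']. congruence. inversion Hl; subst. simpl in *. lia. }
  destruct (form_lim N (weight l) F HN HW1 OKF) as [ta [c [Hta [Hc Hlim]]]].
  exists ta, c. split; auto. split; auto.
  eapply is_lim_seq_ext; [|exact Hlim]. intros M. simpl.
  unfold H. rewrite Ew, EF. reflexivity.
Qed.
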